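(* Let $X$ be an $\operatorname{Irr}$-continuous $T_0$ space. Then for every $x\in X$, $$x=\bigvee\bigcup\{\twoheaddownarrow_{\operatorname{Irr}} y \mid y\ll_{\operatorname{Irr}} x\}.$$
   Context: For a topological space $X$, a nonempty subset $E$ is irreducible if whenever $E\subseteq A_1\cup A_2$ with $A_1,A_2$ closed, $E\subseteq A_1$ or $E\subseteq A_2$. The specialisation order is $x\le y$ iff $x\in\operatorname{cl}(\{y\})$; $\uparrow x=\{z:z\ge x\}$; $\bigvee$ denotes supremum in this order. $\operatorname{Irr}^+(X)$ is the set of irreducible subsets of $X$ whose supremum exists. $x\ll_{\operatorname{Irr}} y$ iff for every $E\in\operatorname{Irr}^+(X)$ with $\bigvee E\ge y$, $E\cap\uparrow x\ne\emptyset$; $\twoheaddownarrow_{\operatorname{Irr}} x=\{y:y\ll_{\operatorname{Irr}} x\}$. $X$ is $\operatorname{Irr}$-continuous if for every $x$, $\twoheaddownarrow_{\operatorname{Irr}} x$ is irreducible and $x=\bigvee\twoheaddownarrow_{\operatorname{Irr}} x$. *)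

(* Defs.v *)
From HB Require Import structures.
From mathcomp Require Import all_boot all_order.
From mathcomp Require Import all_classical all_reals all_analysis.
Set Implicit Arguments. Unset Strict Implicit. Unset Printing Implicit Defensive.
Local Open Scope classical_set_scope.

Section IrrDefs.
Variable X : topologicalType.

Definition spec_le (x y : X) : Prop := closure [set y] x.

Definition irreducible (E : set X) : Prop :=
  E !=set0 /\
  forall A1 A2 : set X, closed A1 -> closed A2 -> E `<=` A1 `|` A2 ->
    E `<=` A1 \/ E `<=` A2.

Definition is_sup (E : set X) (s : X) : Prop :=
  (forall e, E e -> spec_le e s) /\
  (forall u, (forall e, E e -> spec_le e u) -> spec_le s u).

Definition upset (x : X) : set X := [set z | spec_le x z].

Definition IrrPlus (E : set X) : Prop := irreducible E /\ exists s, is_sup E s.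

Definition way_below_Irr (x y : X) : Prop :=
  forall E : set X, IrrPlus E ->
    (exists s, is_sup E s /\ spec_le y s) -> E `&` upset x !=set0.

Definition ddarrow_Irr (x : X) : set X := [set y | way_below_Irr y x].

Definition Irr_continuous : Prop :=
  forall x : X, irreducible (ddarrow_Irr x) /\ is_sup (ddarrow_Irr x) x.

End IrrDefs.

(* Main.v *)
Require Import Defs.
From mathcomp Require Import all_boot all_order.
From mathcomp Require Import all_classical all_reals all_analysis.
Local Open Scope classical_set_scope.
Set Implicit Arguments.

Lemma spec_refl (X : topologicalType) (y : X) : spec_le y y.
Proof. exact: subset_closure. Qed.

Lemma spec_trans (X : topologicalType) (a b c : X) :
  spec_le a b -> spec_le b c -> spec_le a c.
Proof.
move=> hab hbc; rewrite /spec_le.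
have : closure [set b] `<=` closure [set c].
  rewrite [X in _ `<=` X](closure_id _).1; last exact: closed_closure.
  by apply: closureS => z ->.
by apply.
Qed.

Lemma wb_le (X : topologicalType) (e y : X) : way_below_Irr e y -> spec_le e y.
Proof.
move=> h.
have hs : is_sup [set y] y.
  split; first by move=> z ->; exact: spec_refl.
  by move=> u hu; apply: hu.
have hI : IrrPlus [set y].
  split; last by exists y.
  split; first by exists y.
  move=> A1 A2 _ _ hsub.
  case: (hsub y erefl) => h1; [left|right]; by move=> z ->.
have [z [-> hz]] := h [set y] hI (ex_intro _ y (conj hs (@spec_refl X y))).
exact: hz.
Qed.

Theorem lemma3p4 (X : topologicalType) :
  kolmogorov_space X -> Irr_continuous X ->
  forall x : X,
    is_sup (\bigcup_(y in ddarrow_Irr x) ddarrow_Irr y) x.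
Proof.
move=> _ hc x; split.
  move=> e [y hy he]; exact: (spec_trans (wb_le he) (wb_le hy)).
move=> u hu.
have [_ [_ hx]] := hc x.
apply: hx => y hy.
have [_ [_ hyy]] := hc y.
apply: hyy => e he.
by apply: hu; exists y.
Qed.
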